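(* The affine hypersurface $Q\subset\mathbf{A}^4_{\mathbf{C}}$ with coordinates $(t,s,z,w)$ defined by $(w^3-1)(t^2-1)=(z^3-1)(s^2-1)$ is rational. *)

(* Defs.v *)
From HB Require Import structures.
From mathcomp Require Import all_boot all_order all_algebra.
From mathcomp Require Import reals.
From mathcomp.real_closed Require Import complex.
From mathcomp.multinomials Require Import mpoly.

Set Implicit Arguments.
Unset Strict Implicit.
Unset Printing Implicit Defensive.

Import GRing.Theory Num.Theory.
Local Open Scope ring_scope.

Definition on_hyp (K : fieldType) (n : nat) (F : {mpoly K[n]}) (y : 'I_n -> K) :=
  F.@[y] = 0.

(* A rational map A^m --> A^n given componentwise by fractions num i / den i.
   It is evaluated at a point where all denominators are nonzero. *)
Definition ratmap_ev (K : fieldType) (m n : nat)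
  (num den : 'I_n -> {mpoly K[m]}) (x : 'I_m -> K) : 'I_n -> K :=
  fun i => (num i).@[x] / (den i).@[x].

Definition defined_at (K : fieldType) (m n : nat)
  (den : 'I_n -> {mpoly K[m]}) (x : 'I_m -> K) : Prop :=
  forall i, (den i).@[x] != 0.

(* The affine hypersurface V(F) in A^(n+1) is rational: there is a nonempty
   (hence dense) basic open D(a) of A^n and a Zariski-dense open subset
   V(F) /\ D(b) of V(F), together with mutually inverse regular maps
   (given by fractions of polynomials with denominators nonvanishing there)
   D(a) <-> V(F) /\ D(b).  I.e. V(F) is birational to A^n. *)
Definition rational_hypersurface (K : fieldType) (n : nat) (F : {mpoly K[n.+1]}) : Prop :=
  exists (a : {mpoly K[n]}) (b : {mpoly K[n.+1]})
         (fnum fden : 'I_n.+1 -> {mpoly K[n]})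
         (gnum gden : 'I_n -> {mpoly K[n.+1]}),
    [/\ a != 0,
        (* V(F) /\ D(b) is Zariski dense in V(F) *)
        (forall p : {mpoly K[n.+1]},
            (forall y, on_hyp F y -> b.@[y] != 0 -> p.@[y] = 0) ->
            forall y, on_hyp F y -> p.@[y] = 0),
        (forall x : 'I_n -> K, a.@[x] != 0 ->
            [/\ defined_at fden x,
                on_hyp F (ratmap_ev fnum fden x),
                b.@[ratmap_ev fnum fden x] != 0,
                defined_at gden (ratmap_ev fnum fden x) &
                ratmap_ev gnum gden (ratmap_ev fnum fden x) = x]) &
        (forall y : 'I_n.+1 -> K, on_hyp F y -> b.@[y] != 0 ->
            [/\ defined_at gden y,
                a.@[ratmap_ev gnum gden y] != 0,
                defined_at fden (ratmap_ev gnum gden y) &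
                ratmap_ev fnum fden (ratmap_ev gnum gden y) = y])].

(* The polynomial (w^3-1)(t^2-1) - (z^3-1)(s^2-1) in coordinates
   (t,s,z,w) = ('X_0,'X_1,'X_2,'X_3). *)
Definition Fpoly (K : fieldType) : {mpoly K[4]} :=
  ('X_(3 : 'I_4) ^+ 3 - 1) * ('X_(0 : 'I_4) ^+ 2 - 1)
  - ('X_(2 : 'I_4) ^+ 3 - 1) * ('X_(1 : 'I_4) ^+ 2 - 1).

(* Main.v *)
Require Import Defs.
From HB Require Import structures.
From mathcomp Require Import all_boot all_order all_algebra.
From mathcomp Require Import reals.
From mathcomp.real_closed Require Import complex.
From mathcomp.multinomials Require Import mpoly.
From mathcomp Require Import ring lra.
From Stdlib Require Import FunctionalExtensionality.
Set Implicit Arguments. Unset Strict Implicit. Unset Printing Implicit Defensive.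
Import GRing.Theory Num.Theory.
Local Open Scope ring_scope.

Lemma poly_all0 (K : numDomainType) (q : {poly K}) :
  (forall x, q.[x] = 0) -> q = 0.
Proof.
move=> h; apply/eqP; apply: contraT => nz.
have := max_poly_roots nz (rs := [seq i%:R | i <- iota 0 (size q)]).
rewrite size_map size_iota ltnn; apply.
  by apply/allP => x _; rewrite /root h.
by rewrite map_inj_uniq ?iota_uniq // => i j /eqP; rewrite eqr_nat => /eqP.
Qed.

Lemma aux_fld (K : fieldType) (c P e a : K) : a != 0 -> c * (P * e) = e * a * (c * (P / a)).
Proof. by move=> h; field. Qed.

Lemma curve (K : numFieldType) (n : nat) (p : {mpoly K[n]})
  (N : 'I_n -> {poly K}) (Dn G : {poly K}) (l0 : K) :
  Dn.[l0] != 0 -> G != 0 ->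
  (forall l, Dn.[l] != 0 -> G.[l] != 0 -> p.@[fun i => (N i).[l] / Dn.[l]] = 0) ->
  p.@[fun i => (N i).[l0] / Dn.[l0]] = 0.
Proof.
move=> D0 G0 H.
pose d := msize p.
pose Pp := \sum_(m <- msupp p) p@_m *: (\prod_(i < n) (N i) ^+ (m i) * Dn ^+ (d - mdeg m)).
have PE l : Dn.[l] != 0 -> Pp.[l] = Dn.[l] ^+ d * p.@[fun i => (N i).[l] / Dn.[l]].
  move=> Dl; rewrite mevalE horner_sum mulr_sumr; apply: eq_big_seq => m mp.
  rewrite hornerZ hornerM horner_prod horner_exp.
  have lt := msize_mdeg_lt mp.
  have -> : \prod_(i < n) ((N i).[l] / Dn.[l]) ^+ m i =
     (\prod_(i < n) (N i).[l] ^+ m i) / Dn.[l] ^+ mdeg m.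
    rewrite mdegE -prodrXr -prodfV -big_split /=; apply: eq_bigr => i _.
    by rewrite exprMn exprVn.
  under eq_bigr do rewrite horner_exp.
  rewrite /d -(subnK (ltnW lt)) addnK exprD.
  have Dk : Dn.[l] ^+ mdeg m != 0 by rewrite expf_neq0.
  set P := \prod_(i < n) _; set a := Dn.[l] ^+ mdeg m.
  exact: aux_fld.
have Z : Pp * G * Dn = 0.
  apply: poly_all0 => l; rewrite !hornerM.
  have [->|Dl] := eqVneq Dn.[l] 0; first by rewrite mulr0.
  have [->|Gl] := eqVneq G.[l] 0; first by rewrite mulr0 mul0r.
  by rewrite PE // H // mulr0 !mul0r.
have P0 : Pp = 0.
  move/eqP: Z; rewrite !mulf_eq0 (negbTE G0) orbF => /orP[/eqP //|/eqP D].
  by move: D0; rewrite D horner0 eqxx.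
have := PE _ D0; rewrite P0 horner0 => /esym/eqP.
by rewrite mulf_eq0 expf_eq0 (negbTE D0) andbF /= => /eqP.
Qed.

Definition vec4 (T : Type) (a b c d : T) : 'I_4 -> T := fun i => nth a [:: a; b; c; d] i.

Section Alg.
Variable K : numFieldType.
Implicit Types (y : 'I_4 -> K).

Definition Qp y := (y (3:'I_4) ^+ 3 - 1) * (y (0:'I_4) ^+ 2 - 1) = (y (2:'I_4) ^+ 3 - 1) * (y (1:'I_4) ^+ 2 - 1).

Lemma Feval y : (Fpoly K).@[y] =
  (y (3:'I_4) ^+ 3 - 1) * (y (0:'I_4) ^+ 2 - 1) - (y (2:'I_4) ^+ 3 - 1) * (y (1:'I_4) ^+ 2 - 1).
Proof. by rewrite /Fpoly !(mevalB, mevalM, rmorphXn, mevalXU, meval1). Qed.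

Lemma onQ y : on_hyp (Fpoly K) y <-> Qp y.
Proof. by rewrite /on_hyp Feval /Qp; split => [/eqP|->]; rewrite ?subrr // subr_eq0 => /eqP. Qed.

Lemma two_neq0 : (2 : K) != 0. Proof. by rewrite pnatr_eq0. Qed.

Lemma sq1 (x : K) : x ^+ 2 = 1 -> x = 1 \/ x = -1.
Proof. by move/eqP; rewrite sqrf_eq1 => /orP[]/eqP; [left|right]. Qed.

Lemma nat_neq0 (n : nat) : (n.+1%:R : K) != 0. Proof. by rewrite pnatr_eq0. Qed.

Lemma mul_nat_eq0 (n : nat) (x : K) : x * n.+1%:R = 0 -> x = 0.
Proof. by move/eqP; rewrite mulf_eq0 pnatr_eq0 orbF => /eqP. Qed.

Lemma stage0_alg (t s A B : K) : A * (t ^+ 2 - 1) = B * (s ^+ 2 - 1) ->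
  A != 0 -> B != 0 -> A != B -> s != 1 ->
  (s - 1) * (A * (t - 1) ^+ 2 - B * (s - 1) ^+ 2) != 0.
Proof.
move=> F A0 B0 AB s1; rewrite mulf_neq0 //; first by rewrite subr_eq0.
apply/eqP => D.
have id : (A * (t - 1) ^+ 2 - B * (s - 1) ^+ 2) * (s + 1) =
   2 * A * (t - 1) * (t - s) + (s - 1) * (A * (t ^+ 2 - 1) - B * (s ^+ 2 - 1)) by ring.
move: id; rewrite D F subrr mulr0 addr0 mul0r => /esym/eqP.
rewrite !mulf_eq0 (negbTE two_neq0) (negbTE A0) /= !subr_eq0 => /orP[]/eqP E.
- move: F D; rewrite E => F D.
  have : B * (s ^+ 2 - 1) = 0 by rewrite -F; ring.
  move/eqP; rewrite mulf_eq0 (negbTE B0) /= subr_eq0 => /eqP/sq1 [E1|E1].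
    by rewrite E1 eqxx in s1.
  have : B * 4%:R = 0 by rewrite -oppr0 -D E1; ring.
  by move/mul_nat_eq0/eqP; rewrite (negbTE B0).
- move: F D; rewrite E => F D.
  have : (A - B) * (s ^+ 2 - 1) = 0 by rewrite mulrBl F subrr.
  move/eqP; rewrite mulf_eq0 subr_eq0 (negbTE AB) /= subr_eq0 => /eqP/sq1 [E1|E1].
    by rewrite E1 eqxx in s1.
  have : (A - B) * 4%:R = 0 by rewrite -D E1; ring.
  by move/mul_nat_eq0/eqP; rewrite subr_eq0 (negbTE AB).
Qed.

Lemma conic_alg (e1 e2 a b m u : K) : e1 ^+ 2 = 1 -> e2 ^+ 2 = 1 ->
  (a * m ^+ 2 - b) * u = 2 * (b * e2 - a * e1 * m) ->
  a * ((e1 + m * u) ^+ 2 - 1) = b * ((e2 + u) ^+ 2 - 1).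
Proof.
move=> h1 h2 hu; apply/eqP; rewrite -subr_eq0; apply/eqP.
have -> : a * ((e1 + m * u) ^+ 2 - 1) - b * ((e2 + u) ^+ 2 - 1) =
  a * (e1 ^+ 2 - 1) - b * (e2 ^+ 2 - 1) + u * ((a * m ^+ 2 - b) * u - 2 * (b * e2 - a * e1 * m)) by ring.
by rewrite h1 h2 hu !subrr !mulr0 subr0 addr0.
Qed.

Lemma chart_inv (t s A B e1 e2 : K) : A * (t ^+ 2 - 1) = B * (s ^+ 2 - 1) ->
  e1 ^+ 2 = 1 -> e2 ^+ 2 = 1 -> s != e2 ->
  (A * ((t - e1) / (s - e2)) ^+ 2 - B) * (s - e2) = 2 * (B * e2 - A * e1 * ((t - e1) / (s - e2))).
Proof.
move=> F h1 h2 se; rewrite -subr_eq0 in se.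
apply/eqP; rewrite -subr_eq0; apply/eqP.
have -> : (A * ((t - e1) / (s - e2)) ^+ 2 - B) * (s - e2) - 2 * (B * e2 - A * e1 * ((t - e1) / (s - e2)))
  = (A * (t ^+ 2 - 1) - B * (s ^+ 2 - 1) - A * (e1 ^+ 2 - 1) + B * (e2 ^+ 2 - 1)) / (s - e2) by field.
by rewrite F h1 h2 !subrr !mulr0 !subr0 addr0 mul0r.
Qed.

Lemma chart_den (t s A B e1 e2 : K) : s != e2 ->
  A * ((t - e1) / (s - e2)) ^+ 2 - B = (A * (t - e1) ^+ 2 - B * (s - e2) ^+ 2) / (s - e2) ^+ 2.
Proof. by move=> se; rewrite -subr_eq0 in se; field. Qed.

Lemma vec4_eta (T : Type) (y : 'I_4 -> T) : y =1 vec4 (y (0:'I_4)) (y (1:'I_4)) (y (2:'I_4)) (y (3:'I_4)).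
Proof.
by move=> [[|[|[|[|i]]]] Hi] //=; rewrite /vec4 /=; congr y; apply: val_inj.
Qed.

Lemma nz_at (q : {poly K}) x : q.[x] != 0 -> q != 0.
Proof. by apply: contraNneq => ->; rewrite horner0. Qed.

Definition bval y := (y (1:'I_4) - 1) * ((y (3:'I_4) ^+ 3 - 1) * (y (0:'I_4) - 1) ^+ 2
   - (y (2:'I_4) ^+ 3 - 1) * (y (1:'I_4) - 1) ^+ 2).
Definition Dval (e1 e2 : K) y := (y (3:'I_4) ^+ 3 - 1) * (y (0:'I_4) - e1) ^+ 2
   - (y (2:'I_4) ^+ 3 - 1) * (y (1:'I_4) - e2) ^+ 2.

Lemma stage1_gen (p : {mpoly K[4]})
  (H0 : forall y, Qp y -> bval y != 0 -> p.@[y] = 0) y (e1 e2 : K) (zz ww : {poly K}) :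
  Qp y -> e1 ^+ 2 = 1 -> e2 ^+ 2 = 1 -> y (1:'I_4) != e2 -> Dval e1 e2 y != 0 ->
  zz.[0] = y (2:'I_4) -> ww.[0] = y (3:'I_4) ->
  ww ^+ 3 - 1 != 0 -> zz ^+ 3 - 1 != 0 -> ww ^+ 3 - 1 != zz ^+ 3 - 1 -> p.@[y] = 0.
Proof.
move=> Qy h1 h2 se De z0 w0 Anz Bnz ABnz.
pose m0 := (y (0:'I_4) - e1) / (y (1:'I_4) - e2).
pose mm : {poly K} := m0%:P + 'X.
pose At := ww ^+ 3 - 1. pose Bt := zz ^+ 3 - 1.
pose Dn := At * mm ^+ 2 - Bt.
pose U := 2%:P * (Bt * e2%:P - At * e1%:P * mm).
pose S := (e2 - 1)%:P * Dn + U.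
pose N := vec4 (e1%:P * Dn + mm * U) (e2%:P * Dn + U) (zz * Dn) (ww * Dn).
pose phi l := fun i => (N i).[l] / Dn.[l].
have Ev l : Dn.[l] != 0 -> phi l =1 vec4 (e1 + (m0 + l) * (U.[l] / Dn.[l])) (e2 + U.[l] / Dn.[l]) zz.[l] ww.[l].
  move=> Dl [[|[|[|[|i]]]] Hi] //=; rewrite /phi /N /vec4 /=.
  - rewrite hornerD (hornerM e1%:P) (hornerM mm) hornerC /mm (hornerD m0%:P 'X) hornerC hornerX; field; exact: Dl.
  - rewrite hornerD (hornerM e2%:P) hornerC; field; exact: Dl.
  - by rewrite hornerM mulfK.
  - by rewrite hornerM mulfK.
have Dl_eq l : Dn.[l] = (ww.[l] ^+ 3 - 1) * (m0 + l) ^+ 2 - (zz.[l] ^+ 3 - 1).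
  by rewrite /Dn /At /Bt /mm !hornerE.
have Ul_eq l : U.[l] = 2 * ((zz.[l] ^+ 3 - 1) * e2 - (ww.[l] ^+ 3 - 1) * e1 * (m0 + l)).
  by rewrite /U /At /Bt /mm !hornerE.
have Qphi l : Dn.[l] != 0 -> Qp (phi l).
  move=> Dl; rewrite /Qp !(Ev l Dl) /vec4 /=.
  apply: conic_alg => //.
  by rewrite -Ul_eq -Dl_eq mulrC mulfVK.
have D0 : Dn.[0] != 0.
  rewrite Dl_eq z0 w0 addr0 /m0 chart_den //.
  by rewrite mulf_neq0 // invr_neq0 // expf_neq0 // subr_eq0.
have u0 : U.[0] = (y (1:'I_4) - e2) * Dn.[0].
  rewrite Ul_eq Dl_eq z0 w0 addr0 -(chart_inv Qy h1 h2 se) mulrC.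
  by rewrite /m0.
have Ae l : At.[l] = ww.[l] ^+ 3 - 1 by rewrite /At !hornerE.
have Be l : Bt.[l] = zz.[l] ^+ 3 - 1 by rewrite /Bt !hornerE.
have Se l : S.[l] = (e2 - 1) * Dn.[l] + U.[l].
  by rewrite /S (hornerD ((e2 - 1)%:P * Dn)) (hornerM (e2 - 1)%:P) hornerC.
pose G := At * Bt * (At - Bt) * S.
have Gnz : G != 0.
  rewrite /G !mulf_neq0 // ?subr_eq0 //.
  have [y1|y1] := eqVneq (y (1:'I_4)) 1.
  + have E2 : e2 = -1.
      by case: (sq1 h2) => // E; move: se; rewrite E y1 eqxx.
    have e1nz : e1 != 0 by apply/eqP => E; move: h1; rewrite E expr0n /= => /eqP; rewrite eq_sym oner_eq0.
    have -> : S = (- 2%:P) * (At * mm * (mm + e1%:P)).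
      rewrite /S /Dn /U E2 polyCB polyCN polyC1 !polyC_natr.
      ring.
    have mmnz : mm != 0.
      by apply: (@nz_at _ (1 - m0)); rewrite /mm !(hornerD, hornerC, hornerX) addrCA subrr addr0 oner_eq0.
    have mmenz : mm + e1%:P != 0.
      by apply: (@nz_at _ (- m0)); rewrite /mm !(hornerD, hornerC, hornerX) addrN add0r.
    have tnz : - (2%:P : {poly K}) != 0 by rewrite oppr_eq0 polyC_eq0 two_neq0.
    by rewrite !mulf_neq0.
  + apply: (@nz_at _ 0); rewrite Se u0 -mulrDl mulf_neq0 //.
    by rewrite addrC addrA subrK subr_eq0.
have Hyp : forall l, Dn.[l] != 0 -> G.[l] != 0 -> p.@[phi l] = 0.
  move=> l Dl Gl; apply: H0; first exact: Qphi.
  rewrite /G !hornerM !mulf_eq0 !negb_or in Gl.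
  case/andP: Gl => /andP[/andP[Al Bl] ABl] Sl.
  rewrite hornerD hornerN subr_eq0 Ae Be in ABl; rewrite Ae in Al; rewrite Be in Bl.
  rewrite /bval !(Ev l Dl) /vec4 /=.
  apply: stage0_alg => //.
  - apply: conic_alg => //.
    by rewrite -Ul_eq -Dl_eq mulrC mulfVK.
  - apply: contraNneq Sl => E.
    have : (e2 - 1) * Dn.[l] + U.[l] = (e2 + U.[l] / Dn.[l] - 1) * Dn.[l] by field.
    by rewrite E subrr mul0r Se => ->.
have := @curve K 4 p N Dn G 0 D0 Gnz Hyp.
suff E : phi 0 =1 y by rewrite -(meval_eq p E).
move=> i; rewrite (Ev 0 D0) [RHS](vec4_eta y) z0 w0 addr0.
have u0' : U.[0] / Dn.[0] = y (1:'I_4) - e2 by rewrite u0 mulfK.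
rewrite u0' /m0 mulfVK; last by rewrite subr_eq0.
by rewrite [e1 + _]addrC [e2 + _]addrC !subrK.
Qed.

Lemma chart (p : {mpoly K[4]})
  (H0 : forall y, Qp y -> bval y != 0 -> p.@[y] = 0) y (e1 e2 : K) :
  Qp y -> e1 ^+ 2 = 1 -> e2 ^+ 2 = 1 -> y (1:'I_4) != e2 -> Dval e1 e2 y != 0 ->
  (y (3:'I_4) ^+ 3 - 1 != 0) || (y (2:'I_4) ^+ 3 - 1 != 0) -> p.@[y] = 0.
Proof.
move=> Qy h1 h2 se De AB.
have [B0|B0] := eqVneq (y (2:'I_4) ^+ 3 - 1) 0.
- rewrite B0 eqxx orbF in AB.
  apply: (@stage1_gen p H0 y e1 e2 ((y (2:'I_4))%:P + 'X) (y (3:'I_4))%:P) => //.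
  + by rewrite hornerD hornerC hornerX addr0.
  + by rewrite hornerC.
  + by apply: (@nz_at _ 0); rewrite !(hornerD, hornerN, hornerC, horner_exp).
  + apply: (@nz_at _ (- y (2:'I_4))).
    by rewrite !(hornerD, hornerN, hornerC, horner_exp, hornerX) addrN expr0n /= add0r oppr_eq0 oner_eq0.
  + rewrite -subr_eq0; apply: (@nz_at _ (1 - y (2:'I_4))).
    rewrite !(hornerD, hornerN, hornerC, horner_exp, hornerX) addrCA subrr addr0 expr1n subrr.
    by rewrite subr0.
- apply: (@stage1_gen p H0 y e1 e2 (y (2:'I_4))%:P ((y (3:'I_4))%:P + 'X)) => //.
  + by rewrite hornerC.
  + by rewrite hornerD hornerC hornerX addr0.
  + apply: (@nz_at _ (- y (3:'I_4))).
    by rewrite !(hornerD, hornerN, hornerC, horner_exp, hornerX) addrN expr0n /= add0r oppr_eq0 oner_eq0.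
  + by apply: (@nz_at _ 0); rewrite !(hornerD, hornerN, hornerC, horner_exp).
  + rewrite eq_sym -subr_eq0; apply: (@nz_at _ (1 - y (3:'I_4))).
    rewrite !(hornerD, hornerN, hornerC, horner_exp, hornerX) addrCA subrr addr0 expr1n subrr.
    by rewrite subr0.
Qed.

Lemma e2ex (s : K) : exists e2 : K, e2 ^+ 2 = 1 /\ s != e2.
Proof.
have [->|s1] := eqVneq s 1; last by exists 1; rewrite expr1n.
exists (-1); rewrite sqrrN expr1n; split => //.
by apply/eqP => /eqP; rewrite -subr_eq0 opprK -mulr2n pnatr_eq0.
Qed.

Lemma sq_nz (e : K) : e ^+ 2 = 1 -> e != 0.
Proof. by move=> h; apply/eqP => E; move: h; rewrite E expr0n /= => /eqP; rewrite eq_sym oner_eq0. Qed.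

Lemma one_neq_m1 : (1 : K) != -1.
Proof. by apply/eqP => /eqP; rewrite -subr_eq0 opprK -mulr2n pnatr_eq0. Qed.

Lemma four_nz : (4%:R : K) != 0. Proof. by rewrite pnatr_eq0. Qed.

Lemma stage1 (p : {mpoly K[4]})
  (H0 : forall y, Qp y -> bval y != 0 -> p.@[y] = 0) y :
  Qp y -> (y (3:'I_4) ^+ 3 - 1 != 0) || (y (2:'I_4) ^+ 3 - 1 != 0) ->
  (y (3:'I_4) ^+ 3 - 1 != y (2:'I_4) ^+ 3 - 1) || (y (0:'I_4) != 0) -> p.@[y] = 0.
Proof.
move=> Qy AB nt.
have Ch := chart H0 Qy.
move: Qy AB nt Ch; rewrite /Qp /Dval /bval.
set t := y (0:'I_4); set s := y (1:'I_4); set A := y (3:'I_4) ^+ 3 - 1; set B := y (2:'I_4) ^+ 3 - 1.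
move=> Qy AB nt Ch.
have [Wc|nW] := boolP [&& A != 0, B != 0, A != B & s != 1].
  case/and4P: Wc => A0 B0 AB' s1; apply: H0 => //.
  by rewrite /bval -/t -/s -/A -/B; apply: stage0_alg.
have [A0|A0] := eqVneq A 0.
  rewrite A0 eqxx /= in AB.
  move: Qy; rewrite A0 mul0r => /esym/eqP; rewrite mulf_eq0 (negbTE AB) /= subr_eq0 => /eqP s2.
  have snz : s != 0 by apply: sq_nz.
  apply: (Ch 1 (- s)) => //; first by rewrite expr1n.
  - by rewrite sqrrN.
  - apply/eqP => /eqP; rewrite -subr_eq0 opprK -mulr2n -mulr_natr mulf_eq0 pnatr_eq0 orbF.
    exact/negP.
  - rewrite A0 mul0r sub0r oppr_eq0 opprK.
    have -> : (s + s) ^+ 2 = 4%:R * s ^+ 2 by ring.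
    by rewrite s2 mulr1 mulf_neq0 // four_nz.
  - by rewrite AB orbT.
have [B0|B0] := eqVneq B 0.
  move: Qy; rewrite B0 mul0r => /eqP; rewrite mulf_eq0 (negbTE A0) /= subr_eq0 => /eqP t2.
  have [e2 [h2 se]] := e2ex s.
  apply: (Ch (- t) e2) => //; first by rewrite sqrrN.
  - rewrite B0 mul0r subr0 opprK.
    have -> : (t + t) ^+ 2 = 4%:R * t ^+ 2 by ring.
    by rewrite t2 mulr1 mulf_neq0 // four_nz.
have [AB'|AB'] := eqVneq A B.
  rewrite AB' eqxx /= in nt.
  have : B * ((t - s) * (t + s)) = 0.
    have -> : (t - s) * (t + s) = (t ^+ 2 - 1) - (s ^+ 2 - 1) by ring.
    by rewrite mulrBr -AB' Qy AB' subrr.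
  move/eqP; rewrite !mulf_eq0 (negbTE B0) /= => /orP[]; rewrite ?subr_eq0 ?addr_eq0 => /eqP E.
  - have [e2 [h2 se]] := e2ex s.
    apply: (Ch (- e2) e2) => //; first by rewrite sqrrN.
    + rewrite AB' E.
      have -> : B * (s - - e2) ^+ 2 - B * (s - e2) ^+ 2 = 4%:R * B * s * e2 by ring.
      by rewrite !mulf_neq0 ?four_nz ?(sq_nz h2) //; move: nt; rewrite E.
  - have [e2 [h2 se]] := e2ex s.
    apply: (Ch e2 e2) => //.
    + rewrite AB' E.
      have -> : B * (- s - e2) ^+ 2 - B * (s - e2) ^+ 2 = 4%:R * B * s * e2 by ring.
      rewrite !mulf_neq0 ?four_nz ?(sq_nz h2) //.
      by apply: contraNneq nt => s0; rewrite E s0 oppr0.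
have s1 : s = 1.
  apply/eqP; apply: contraNT nW => s1; apply/and4P; split => //.
move: Qy; rewrite s1 expr1n subrr mulr0 => /eqP; rewrite mulf_eq0 (negbTE A0) /= subr_eq0 => /eqP t2.
apply: (Ch t (-1)) => //; first by rewrite sqrrN expr1n.
- by rewrite s1 one_neq_m1.
- rewrite s1 subrr expr0n /= mulr0 sub0r oppr_eq0 opprK.
  have -> : (1 + 1) ^+ 2 = 4%:R :> K by rewrite -mulr2n -natrX.
  by rewrite mulf_neq0 // four_nz.
Qed.

Lemma curve4 (p : {mpoly K[4]}) (a b c d G : {poly K}) l0 : G != 0 ->
  (forall l, G.[l] != 0 -> p.@[vec4 a.[l] b.[l] c.[l] d.[l]] = 0) ->
  p.@[vec4 a.[l0] b.[l0] c.[l0] d.[l0]] = 0.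
Proof.
move=> Gnz H.
have E l : (fun i => (vec4 a b c d i).[l] / 1.[l]) =1 vec4 a.[l] b.[l] c.[l] d.[l].
  by move=> [[|[|[|[|i]]]] Hi] //=; rewrite /vec4 /= hornerC divr1.
rewrite -(meval_eq p (E l0)); apply: (@curve K 4 p (vec4 a b c d) 1 G l0) => //.
  by rewrite hornerC oner_eq0.
by move=> l _ Gl; rewrite (meval_eq p (E l)); apply: H.
Qed.

Lemma eval_vec4 (p : {mpoly K[4]}) y (a b c d : K) :
  a = y (0:'I_4) -> b = y (1:'I_4) -> c = y (2:'I_4) -> d = y (3:'I_4) ->
  p.@[vec4 a b c d] = p.@[y].
Proof. by move=> -> -> -> ->; apply: meval_eq => i; rewrite -vec4_eta. Qed.

Lemma stage2 (p : {mpoly K[4]})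
  (H0 : forall y, Qp y -> bval y != 0 -> p.@[y] = 0) y :
  Qp y -> (y (3:'I_4) ^+ 3 - 1 != 0) || (y (2:'I_4) ^+ 3 - 1 != 0) -> p.@[y] = 0.
Proof.
move=> Qy AB.
have [nt|] := boolP ((y (3:'I_4) ^+ 3 - 1 != y (2:'I_4) ^+ 3 - 1) || (y (0:'I_4) != 0)).
  exact: stage1.
rewrite negb_or !negbK => /andP[/eqP AB' /eqP t0].
have A0 : y (3:'I_4) ^+ 3 - 1 != 0 by move: AB; rewrite AB' orbb.
have s0 : y (1:'I_4) = 0.
  move: Qy; rewrite /Qp AB' t0 => /(mulfI _).
  rewrite -AB' => /(_ A0) /eqP; rewrite expr0n /= sub0r eq_sym subr_eq addrC subrr eq_sym.
  by rewrite eq_sym sqrf_eq0 => /eqP.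
rewrite -(@eval_vec4 p y ('X).[0] (- 'X).[0] (y (2:'I_4))%:P.[0] (y (3:'I_4))%:P.[0]);
  try by rewrite ?hornerX ?hornerN ?hornerC ?hornerX ?oppr0.
apply: (@curve4 p _ _ _ _ 'X) => [|l]; first by rewrite polyX_eq0.
rewrite hornerX => l0; apply: (stage1 H0);
  by rewrite /Qp /vec4 /= ?hornerN ?hornerC ?hornerX ?sqrrN ?A0 ?AB' ?l0 ?orbT.
Qed.

Lemma conic_alg1 (a b m u : K) : (a * m ^+ 2 - b) * u = 2 * (b - a * m) ->
  a * ((1 + m * u) ^+ 2 - 1) = b * ((1 + u) ^+ 2 - 1).
Proof. by move=> h; apply: conic_alg; rewrite ?expr1n // !mulr1. Qed.

Lemma st3 (t s : K) : t ^+ 2 != 1 -> s ^+ 2 != 1 -> t ^+ 2 != s ^+ 2 ->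
  let g := (s ^+ 2 - 1) / (t ^+ 2 - 1) in let m := (t - 1) / (s - 1) in
  (g * 3%:R * m ^+ 2 - 3%:R != 0) /\
  (g * 3%:R * m ^+ 2 - 3%:R) * (s - 1) = 2 * (3%:R - g * 3%:R * m).
Proof.
move=> t1 s1 ts g m.
have tm : t - 1 != 0 by rewrite subr_eq0; apply: contraNneq t1 => ->; rewrite expr1n.
have tp : t + 1 != 0 by rewrite addr_eq0; apply: contraNneq t1 => ->; rewrite sqrrN expr1n.
have sm : s - 1 != 0 by rewrite subr_eq0; apply: contraNneq s1 => ->; rewrite expr1n.
have t2 : t ^+ 2 - 1 != 0 by rewrite subr_eq0.
have tsn : t - s != 0 by rewrite subr_eq0; apply: contraNneq ts => ->.
split.
  have -> : g * 3%:R * m ^+ 2 - 3%:R = 6%:R * (t - s) / ((t + 1) * (s - 1)).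
    rewrite /g /m; field.
    by rewrite sm tp t2.
  by rewrite !mulf_neq0 // ?pnatr_eq0 // invr_neq0 // mulf_neq0.
rewrite /g /m; field.
by rewrite sm t2.
Qed.

Lemma cube_nz (c : K) : (c%:P + 'X) ^+ 3 - 1 != 0.
Proof.
apply: (@nz_at _ (- c)).
by rewrite !(hornerD, hornerN, hornerC, horner_exp, hornerX) addrN expr0n /= add0r oppr_eq0 oner_eq0.
Qed.

Lemma stage3 (p : {mpoly K[4]})
  (H0 : forall y, Qp y -> bval y != 0 -> p.@[y] = 0) y :
  Qp y -> y (3:'I_4) ^+ 3 = 1 -> y (2:'I_4) ^+ 3 = 1 -> p.@[y] = 0.
Proof.
move=> Qy hw hz.
have R2 := stage2 H0.
set t := y (0:'I_4); set s := y (1:'I_4); set z := y (2:'I_4); set w := y (3:'I_4).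
have [t2|t2] := eqVneq (t ^+ 2) 1.
  rewrite -(@eval_vec4 p y (t%:P).[0] (s%:P).[0] (z%:P).[0] (w%:P + 'X).[0]);
    try by rewrite ?hornerD ?hornerC ?hornerX ?addr0.
  apply: (@curve4 p _ _ _ _ _ _ (cube_nz w)) => l; rewrite !(hornerD, hornerN, hornerC, hornerX, horner_exp) => Gl; apply: R2.
    by rewrite /Qp /vec4 /= t2 hz !subrr mulr0 mul0r.
  by rewrite /vec4 /= ?hornerD ?hornerC ?hornerX Gl.
have [s2|s2] := eqVneq (s ^+ 2) 1.
  rewrite -(@eval_vec4 p y (t%:P).[0] (s%:P).[0] (z%:P + 'X).[0] (w%:P).[0]);
    try by rewrite ?hornerD ?hornerC ?hornerX ?addr0.
  apply: (@curve4 p _ _ _ _ _ _ (cube_nz z)) => l; rewrite !(hornerD, hornerN, hornerC, hornerX, horner_exp) => Gl; apply: R2.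
    by rewrite /Qp /vec4 /= s2 hw !subrr mulr0 mul0r.
  by rewrite /vec4 /= ?hornerD ?hornerC ?hornerX Gl orbT.
have [ts|ts] := eqVneq (t ^+ 2) (s ^+ 2).
  rewrite -(@eval_vec4 p y (t%:P).[0] (s%:P).[0] (z%:P * (1%:P + 'X)).[0] (w%:P * (1%:P + 'X)).[0]);
    try by rewrite ?hornerM ?hornerD ?hornerC ?hornerX ?addr0 ?mulr1.
  apply: (@curve4 p _ _ _ _ _ _ (cube_nz 1)) => l; rewrite !(hornerD, hornerN, hornerC, hornerX, horner_exp) => Gl; apply: R2.
    by rewrite /Qp /vec4 /= ?hornerM ?hornerD ?hornerC ?hornerX !exprMn hz hw !mul1r ts.
  by rewrite /vec4 /= ?hornerM ?hornerD ?hornerC ?hornerX !exprMn (hz : z ^+ 3 = 1) mul1r Gl orbT.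
have [D0' U0'] := st3 t2 s2 ts.
pose g := (s ^+ 2 - 1) / (t ^+ 2 - 1).
pose m0 := (t - 1) / (s - 1).
pose mm : {poly K} := m0%:P.
pose zz : {poly K} := z%:P * (1%:P + 'X).
pose ww : {poly K} := w%:P * (1%:P + g%:P * 'X).
pose At : {poly K} := g%:P * (3%:R%:P + 3%:R%:P * (g%:P * 'X) + (g%:P * 'X) ^+ 2).
pose Bt : {poly K} := 3%:R%:P + 3%:R%:P * 'X + 'X ^+ 2.
pose Dn := At * mm ^+ 2 - Bt.
pose U := 2%:P * (Bt - At * mm).
pose N := vec4 (Dn + mm * U) (Dn + U) (zz * Dn) (ww * Dn).
pose phi l := fun i => (N i).[l] / Dn.[l].
have Ae l : At.[l] = g * (3%:R + 3%:R * (g * l) + (g * l) ^+ 2).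
  by rewrite /At !(hornerM, hornerD, hornerC, hornerX, horner_exp).
have Be l : Bt.[l] = 3%:R + 3%:R * l + l ^+ 2.
  by rewrite /Bt !(hornerM, hornerD, hornerC, hornerX, horner_exp).
have Dl_eq l : Dn.[l] = At.[l] * m0 ^+ 2 - Bt.[l].
  by rewrite /Dn hornerD hornerN hornerM horner_exp hornerC.
have Ul_eq l : U.[l] = 2 * (Bt.[l] - At.[l] * m0).
  by rewrite /U hornerM hornerC hornerD hornerN hornerM hornerC.
have wl l : ww.[l] ^+ 3 - 1 = l * At.[l].
  rewrite Ae /ww !(hornerM, hornerD, hornerC, hornerX) exprMn (hw : w ^+ 3 = 1) mul1r; ring.
have zl l : zz.[l] ^+ 3 - 1 = l * Bt.[l].
  rewrite Be /zz !(hornerM, hornerD, hornerC, hornerX) exprMn (hz : z ^+ 3 = 1) mul1r; ring.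
have Ev l : Dn.[l] != 0 -> phi l =1 vec4 (1 + m0 * (U.[l] / Dn.[l])) (1 + U.[l] / Dn.[l]) zz.[l] ww.[l].
  move=> Dl [[|[|[|[|i]]]] Hi] //=; rewrite /phi /N /vec4 /=.
  - rewrite (hornerD Dn) (hornerM mm) /mm hornerC; field; exact: Dl.
  - rewrite (hornerD Dn); field; exact: Dl.
  - by rewrite hornerM mulfK.
  - by rewrite hornerM mulfK.
have D0 : Dn.[0] != 0.
  by rewrite Dl_eq Ae Be !mulr0 expr0n /= !addr0; exact: D0'.
have u0 : U.[0] / Dn.[0] = s - 1.
  rewrite Ul_eq Dl_eq Ae Be !mulr0 expr0n /= !addr0 -U0' mulrAC divff ?mul1r //.
pose G := (1%:P + 'X) ^+ 3 - 1 : {poly K}.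
have := @curve K 4 p N Dn G 0 D0 (cube_nz 1).
suff E : phi 0 =1 y.
  move=> C; rewrite -(meval_eq p E); apply: C => l Dl Gl.
  apply: (R2 (phi l)).
  - rewrite /Qp !(Ev l Dl) /vec4 /= wl zl -[LHS]mulrA -[RHS]mulrA; congr (_ * _).
    apply: conic_alg1.
    by rewrite -Dl_eq -Ul_eq mulrC mulfVK.
  - rewrite !(Ev l Dl) /vec4 /= zl Be; apply/orP; right.
    move: Gl; rewrite /G !(hornerD, hornerN, hornerC, hornerX, horner_exp).
    have -> : (1 + l) ^+ 3 - 1 = l * (3%:R + 3%:R * l + l ^+ 2) by ring.
    by [].
move=> i; rewrite (Ev 0 D0) [RHS](vec4_eta y) u0 /m0 mulfVK; last first.
  by rewrite subr_eq0; apply: contraNneq s2 => ->; rewrite expr1n.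
rewrite /zz /ww !(hornerM, hornerD, hornerC, hornerX) mulr0 !addr0 !mulr1.
by rewrite [1 + _]addrC [1 + (s - 1)]addrC !subrK.
Qed.

Definition bpoly : {mpoly K[4]} := ('X_(1:'I_4) - 1) *
  (('X_(3:'I_4) ^+ 3 - 1) * ('X_(0:'I_4) - 1) ^+ 2 - ('X_(2:'I_4) ^+ 3 - 1) * ('X_(1:'I_4) - 1) ^+ 2).

Lemma bpolyE y : bpoly.@[y] = bval y.
Proof. by rewrite /bpoly /bval !(mevalB, mevalM, rmorphXn, mevalXU, meval1). Qed.

Lemma dense (p : {mpoly K[4]}) :
  (forall y, on_hyp (Fpoly K) y -> bpoly.@[y] != 0 -> p.@[y] = 0) ->
  forall y, on_hyp (Fpoly K) y -> p.@[y] = 0.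
Proof.
move=> H y /onQ Qy.
have H0 : forall y, Qp y -> bval y != 0 -> p.@[y] = 0.
  by move=> y' /onQ Q' b'; apply: H => //; rewrite bpolyE.
have [AB|] := boolP ((y (3:'I_4) ^+ 3 - 1 != 0) || (y (2:'I_4) ^+ 3 - 1 != 0)).
  exact: (stage2 H0).
rewrite negb_or !negbK !subr_eq0 => /andP[/eqP hw /eqP hz].
exact: (stage3 H0).
Qed.

Definition vec3 (T : Type) (a b c : T) : 'I_3 -> T := fun i => nth a [:: a; b; c] i.

Lemma vec3_eta (T : Type) (x : 'I_3 -> T) : x = vec3 (x (0:'I_3)) (x (1:'I_3)) (x (2:'I_3)).
Proof.
apply: functional_extensionality.
by move=> [[|[|[|i]]] Hi] //=; rewrite /vec3 /=; congr x; apply: val_inj.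
Qed.

Lemma vec4_ext (T : Type) (y : 'I_4 -> T) a b c d :
  a = y (0:'I_4) -> b = y (1:'I_4) -> c = y (2:'I_4) -> d = y (3:'I_4) -> vec4 a b c d = y.
Proof.
move=> -> -> -> ->; apply: functional_extensionality => i.
by rewrite -vec4_eta.
Qed.

Definition Am : {mpoly K[3]} := 'X_(2:'I_3) ^+ 3 - 1.
Definition Bm : {mpoly K[3]} := 'X_(1:'I_3) ^+ 3 - 1.
Definition denm : {mpoly K[3]} := Am * 'X_(0:'I_3) ^+ 2 - Bm.
Definition vm : {mpoly K[3]} := Bm - Am * 'X_(0:'I_3).
Definition apoly : {mpoly K[3]} := denm * vm.
Definition fnum : 'I_4 -> {mpoly K[3]} :=
  vec4 (denm + 'X_(0:'I_3) * (2 * vm)) (denm + 2 * vm) 'X_(1:'I_3) 'X_(2:'I_3).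
Definition fden : 'I_4 -> {mpoly K[3]} := vec4 denm denm 1 1.
Definition gnum : 'I_3 -> {mpoly K[4]} := vec3 ('X_(0:'I_4) - 1) 'X_(2:'I_4) 'X_(3:'I_4).
Definition gden : 'I_3 -> {mpoly K[4]} := vec3 ('X_(1:'I_4) - 1) 1 1.

Lemma v4_0 (T : Type) (a b c d : T) : vec4 a b c d (0:'I_4) = a. Proof. by []. Qed.
Lemma v4_1 (T : Type) (a b c d : T) : vec4 a b c d (1:'I_4) = b. Proof. by []. Qed.
Lemma v4_2 (T : Type) (a b c d : T) : vec4 a b c d (2:'I_4) = c. Proof. by []. Qed.
Lemma v4_3 (T : Type) (a b c d : T) : vec4 a b c d (3:'I_4) = d. Proof. by []. Qed.
Lemma v3_0 (T : Type) (a b c : T) : vec3 a b c (0:'I_3) = a. Proof. by []. Qed.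
Lemma v3_1 (T : Type) (a b c : T) : vec3 a b c (1:'I_3) = b. Proof. by []. Qed.
Lemma v3_2 (T : Type) (a b c : T) : vec3 a b c (2:'I_3) = c. Proof. by []. Qed.
Ltac vsimp := rewrite ?(v4_0, v4_1, v4_2, v4_3, v3_0, v3_1, v3_2).

Lemma ext4 (T : Type) (f g : 'I_4 -> T) :
  f (0:'I_4) = g (0:'I_4) -> f (1:'I_4) = g (1:'I_4) -> f (2:'I_4) = g (2:'I_4) -> f (3:'I_4) = g (3:'I_4) -> f = g.
Proof.
move=> h0 h1 h2 h3; apply: functional_extensionality => i.
by rewrite (vec4_eta f) (vec4_eta g) h0 h1 h2 h3.
Qed.

Lemma vec3_ext (T : Type) (x : 'I_3 -> T) a b c :
  a = x (0:'I_3) -> b = x (1:'I_3) -> c = x (2:'I_3) -> x = vec3 a b c.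
Proof. by move=> -> -> ->; apply: vec3_eta. Qed.

Ltac mev := rewrite ?(mevalD, mevalB, mevalM, mevalN, rmorphXn, mevalXU, meval1, rmorph_nat).

Lemma main_gen : rational_hypersurface (Fpoly K).
Proof.
exists apoly, bpoly, fnum, fden, gnum, gden; split.
- apply/eqP => h; have := congr1 (meval (fun _ => 0)) h.
  rewrite meval0 /apoly /denm /vm /Am /Bm; mev.
  have -> : ((0 ^+ 3 - 1) * 0 ^+ 2 - (0 ^+ 3 - 1)) * (0 ^+ 3 - 1 - (0 ^+ 3 - 1) * 0) = - 1 :> K by ring.
  by move/eqP; rewrite oppr_eq0 oner_eq0.
- exact: dense.
- move=> x ax.
  set m := x (0:'I_3); set z := x (1:'I_3); set w := x (2:'I_3).
  set A := w ^+ 3 - 1; set B := z ^+ 3 - 1.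
  have dE : denm.@[x] = A * m ^+ 2 - B by rewrite /denm /Am /Bm; mev.
  have vE : vm.@[x] = B - A * m by rewrite /vm /Am /Bm; mev.
  move: ax; rewrite /apoly mevalM dE vE mulf_eq0 negb_or => /andP[dnz vnz].
  set d := A * m ^+ 2 - B in dE dnz.
  pose u := 2 * (B - A * m) / d.
  have unz : u != 0 by rewrite /u !mulf_neq0 ?two_neq0 ?invr_neq0.
  have E : ratmap_ev fnum fden x = vec4 (1 + m * u) (1 + u) z w.
    symmetry; apply: vec4_ext; rewrite /ratmap_ev /fnum /fden; vsimp.
    + rewrite mevalD dE !mevalM vE mevalXU rmorph_nat /u -/m; field; exact: dnz.
    + rewrite mevalD dE !mevalM vE rmorph_nat /u; field; exact: dnz.
    + by rewrite meval1 divr1 mevalXU.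
    + by rewrite meval1 divr1 mevalXU.
  rewrite E; split.
  + by move=> [[|[|[|[|i]]]] Hi] //=; rewrite /fden /vec4 /=; mev; rewrite ?dE ?oner_eq0.
  + apply/onQ; rewrite /Qp; vsimp; apply: conic_alg1.
    by rewrite -/d /u mulrCA mulfV // mulr1.
  + rewrite bpolyE /bval /vec4 /=.
    have -> : (1 + u - 1) * ((w ^+ 3 - 1) * (1 + m * u - 1) ^+ 2 - (z ^+ 3 - 1) * (1 + u - 1) ^+ 2)
      = u ^+ 3 * d by rewrite /d /A /B; ring.
    by rewrite mulf_neq0 // expf_neq0.
  + move=> [[|[|[|i]]] Hi] //=; rewrite /gden /vec3 /=; vsimp; mev; rewrite ?oner_eq0 //.
    by rewrite addrC addKr.
  + rewrite [RHS](vec3_eta x); apply: vec3_ext; rewrite /ratmap_ev /gnum /gden; vsimp; mev; vsimp; rewrite ?divr1 //.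
    by rewrite [1 + m * u]addrC [1 + u]addrC !addrK mulfK.
- move=> y /onQ Qy; rewrite bpolyE /bval.
  set t := y (0:'I_4); set s := y (1:'I_4); set z := y (2:'I_4); set w := y (3:'I_4).
  rewrite mulf_eq0 negb_or => /andP[snz Dnz].
  move: Qy; rewrite /Qp -/t -/s -/z -/w => Qy.
  set A := w ^+ 3 - 1 in Qy Dnz *; set B := z ^+ 3 - 1 in Qy Dnz *.
  have s1 : s != 1 by rewrite -subr_eq0.
  pose m := (t - 1) / (s - 1).
  have G : ratmap_ev gnum gden y = vec3 m z w.
    apply: vec3_ext; rewrite /ratmap_ev /gnum /gden; vsimp; mev; rewrite ?divr1 //.
  have dE : denm.@[vec3 m z w] = A * m ^+ 2 - B by rewrite /denm /Am /Bm; mev; vsimp.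
  have vE : vm.@[vec3 m z w] = B - A * m by rewrite /vm /Am /Bm; mev; vsimp.
  have dnz : A * m ^+ 2 - B != 0.
    rewrite /m (@chart_den t s A B 1 1) //.
    by rewrite mulf_neq0 // invr_neq0 // expf_neq0.
  have hv : 2 * (B - A * m) = (A * m ^+ 2 - B) * (s - 1).
    by rewrite (@chart_inv t s A B 1 1 Qy (expr1n _ _) (expr1n _ _) s1) !mulr1.
  have vnz : B - A * m != 0.
    apply: contraNneq (mulf_neq0 dnz snz) => h.
    by rewrite -hv h mulr0.
  rewrite G; split.
  + move=> [[|[|[|i]]] Hi] //=; rewrite /gden /vec3 /=; vsimp; mev; rewrite ?oner_eq0 //.
  + by rewrite /apoly mevalM dE vE mulf_neq0.
  + by move=> [[|[|[|[|i]]]] Hi] //=; rewrite /fden /vec4 /=; mev; rewrite ?dE ?oner_eq0.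
  + apply: ext4; rewrite /ratmap_ev /fnum /fden; vsimp.
    * rewrite mevalD dE !mevalM vE mevalXU rmorph_nat; vsimp; rewrite hv /m -/t; field.
      by rewrite snz /= mulNr.

    * rewrite mevalD dE !mevalM vE rmorph_nat hv -/s; field; exact: dnz.
    * by rewrite meval1 divr1 mevalXU.
    * by rewrite meval1 divr1 mevalXU.
Qed.

End Alg.

Theorem proposition2p6 (R : realType) :
  rational_hypersurface (Fpoly (complex R)).
Proof. exact: main_gen. Qed.
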